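(* Let $\mathcal{P}_{XY}$ be a probability measure on a product measurable space $(\mathcal{X}\times\mathcal{Y},\mathcal{F})$ with marginals $\mathcal{P}_X,\mathcal{P}_Y$, and assume $\mathcal{P}_{XY}\ll\mathcal{P}_X\mathcal{P}_Y$. Then for every $E\in\mathcal{F}$, $$\mathcal{P}_{XY}(E)\le\left(\operatorname*{ess\,sup}_{\mathcal{P}_Y}\mathcal{P}_X(E_Y)\right)\exp\left(\mathcal{L}(X\to Y)\right).$$
   Context: For $E\in\mathcal{F}$ and $y\in\mathcal{Y}$, $E_y:=\{x:(x,y)\in E\}$; $\operatorname*{ess\,sup}_{\mathcal{P}_Y}\mathcal{P}_X(E_Y)$ is the $\mathcal{P}_Y$-essential supremum of $y\mapsto\mathcal{P}_X(E_y)$. The maximal leakage from $X$ to $Y$ (Sibson mutual information of order $\infty$) is, with $f=\frac{d\mathcal{P}_{XY}}{d\mathcal{P}_X\mathcal{P}_Y}$, $\mathcal{L}(X\to Y)=I_\infty(X;Y)=\log\mathbb{E}_{\mathcal{P}_Y}\left[\operatorname*{ess\,sup}_{\mathcal{P}_X}f(\cdot,Y)\right]$, where for fixed $y$ the essential supremum of $x\mapsto f(x,y)$ is taken with respect to $\mathcal{P}_X$ (for discrete alphabets this is $\log\mathbb{E}_{\mathcal{P}_Y}\left[\sup_{x:\mathcal{P}_X(x)>0}\frac{\mathcal{P}_{XY}(x,Y)}{\mathcal{P}_X(x)\mathcal{P}_Y(Y)}\right]$). Logarithms are natural. *)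

(* Defs.v *)
From HB Require Import structures.
From mathcomp Require Import all_boot all_order all_algebra.
From mathcomp Require Import all_classical all_reals all_analysis.
From mathcomp Require Import ess_sup_inf.
Set Implicit Arguments. Unset Strict Implicit. Unset Printing Implicit Defensive.
Import Order.TTheory GRing.Theory Num.Theory.
Import numFieldNormedType.Exports.
Local Open Scope classical_set_scope.
Local Open Scope ring_scope.
Local Open Scope ereal_scope.

Definition lne {R : realType} (x : \bar R) : \bar R :=
  match x with
  | r%:E => (ln r)%:E
  | +oo => +oo
  | -oo => -oo
  end.

Definition max_leakage d1 d2 (X : measurableType d1) (Y : measurableType d2)
  {R : realType} (PXY : probability (X * Y)%type R)
  (PX : probability X R) (PY : probability Y R) : \bar R :=
  let f := Radon_Nikodym (charge_of_finite_measure PXY)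
             (PX \x PY : probability (X * Y)%type R) in
  lne (\int[PY]_y ess_sup PX (fun x => f (x, y))).

(* Main.v *)
Require Import Defs.
From HB Require Import structures.
From mathcomp Require Import all_boot all_order all_algebra.
From mathcomp Require Import all_classical all_reals all_analysis.
From mathcomp Require Import ess_sup_inf.
From mathcomp Require Import measurable_realfun.
Import Order.TTheory GRing.Theory Num.Theory.
Import numFieldNormedType.Exports.
Local Open Scope classical_set_scope.
Local Open Scope ring_scope.
Local Open Scope ereal_scope.

Lemma le_integral_gen d (T : measurableType d) (R : realType)
  (mu : {measure set T -> \bar R}) (f1 f2 : T -> \bar R) :
  (forall x, 0 <= f1 x) -> (forall x, f1 x <= f2 x) ->
  \int[mu]_x f1 x <= \int[mu]_x f2 x.
Proof.
move=> f10 f12.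
have f20 x : 0 <= f2 x by apply: le_trans (f12 x).
rewrite !ge0_integralTE//.
apply: le_ereal_sup => _ [h /= hf1 <-]; exists h => //= x.
exact: le_trans (hf1 x) (f12 x).
Qed.

Lemma integral_null0 d (T : measurableType d) (R : realType)
  (mu : {measure set T -> \bar R}) (h : T -> \bar R) (N : set T) :
  measurable N -> mu N = 0 -> (forall x, 0 <= h x) ->
  (forall x, ~ N x -> h x = 0) ->
  \int[mu]_x h x = 0.
Proof.
move=> mN N0 h0 hN; apply/eqP; rewrite eq_le integral_ge0 ?andbT//.
apply: (le_trans (@le_integral_gen _ _ _ mu h ((cst +oo) \_ N) h0 _)).
  move=> x; rewrite patchE; case: ifPn => [_|]; first exact: leey.
  by rewrite notin_setE => /hN ->.
by rewrite -integral_mkcond integral_cst// N0 mule0.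
Qed.

Lemma le_expeR_lne (R : realType) (I : \bar R) : 0 <= I -> I <= expeR (Defs.lne I).
Proof.
case: I => [r| |] //= r0.
rewrite lee_fin in r0; rewrite lee_fin.
have [->|rp] := eqVneq r 0%R; first exact: expR_ge0.
rewrite lnK// posrE lt0r rp r0//.
Qed.

Lemma expeR_lne_gt0 (R : realType) (I : \bar R) : 0 <= I -> 0 < expeR (Defs.lne I).
Proof.
case: I => [r| |] //= r0.
by rewrite lte_fin expR_gt0.
Qed.

Theorem corollary3 (d1 d2 : measure_display)
  (X : measurableType d1) (Y : measurableType d2) (R : realType)
  (PXY : probability (X * Y)%type R)
  (PX : probability X R) (PY : probability Y R)
  (hPX : forall A : set X, measurable A -> PX A = PXY (A `*` [set: Y]))
  (hPY : forall B : set Y, measurable B -> PY B = PXY ([set: X] `*` B))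
  (hac : PXY `<< (PX \x PY))
  (E : set (X * Y)%type) (mE : measurable E) :
  PXY E <= ess_sup PY (fun y => PX (ysection E y))
           * expeR (max_leakage PXY PX PY).
Proof.
set P := (PX \x PY : probability (X * Y)%type R).
set f := Radon_Nikodym (charge_of_finite_measure PXY) P.
have hac' : charge_of_finite_measure PXY `<< P by exact: hac.
have mf := measurable_int _ (Radon_Nikodym_integrable hac').
rewrite -/f in mf.
set g := fun y => ess_sup PX (fun x => f (x, y)).
set Ig := \int[PY]_y g y.
have -> : max_leakage PXY PX PY = Defs.lne Ig by [].
have [N0 [mN0 PN00 subN0]] := ae_eq_Radon_Nikodym_SigmaFinite (mu := P) hac measurableT.
have f0 z : ~ N0 z -> 0 <= f z.
  move=> nz; have : ~ ~ (setT z -> Radon_Nikodym_SigmaFinite.f PXY P z = f z).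
    by move=> /subN0.
  move=> /contrapT /(_ I) <-; exact: Radon_Nikodym_SigmaFinite.f_ge0.
pose K := fubini_G PX (EFin \o \1_N0 : X * Y -> \bar R).
have mI := (measurable_realfun.measurable_EFinP setT (\1_N0 : X * Y -> R)%R).2
  (measurable_realfun.measurable_indic (R := R) (D := setT) mN0).
have I0 z : 0 <= (EFin \o \1_N0 : X * Y -> \bar R) z by rewrite /= lee_fin.
have mK := measurable_fun_fubini_tonelli_G (m1 := PX) _ mI I0; rewrite -/K in mK.
have K0 y : 0 <= K y by apply: integral_ge0 => x _; exact: I0.
have intK : \int[PY]_y K y = 0.
  have := fubini_tonelli2 (m1 := PX) (m2 := PY) _ mI I0; rewrite -/K => <-.
  rewrite integral_indic// setIT; exact: PN00.
have [M [mM PM0 subM]] : ae_eq PY setT K (cst 0).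
  apply/(ae_eq_integral_abs PY measurableT mK).
  rewrite -[RHS]intK; apply: eq_integral => y _; rewrite gee0_abs//.
have Ky y : ~ M y -> K y = 0.
  move=> ny; apply: contrapT => h; apply: ny; apply: subM => /= /(_ I); exact: h.
have g0 y : ~ M y -> 0 <= g y.
  move=> ny; apply: ess_sup_gee.
    by have := lte01 (R := R); rewrite -(probability_setT PX).
  have mKy := (measurable_realfun.measurable_EFinP setT (\1_(ysection N0 y) : X -> R)%R).2
    (measurable_realfun.measurable_indic (R := R) (D := setT) (measurable_ysection y mN0)).
  have : ae_eq PX setT (EFin \o (\1_(ysection N0 y) : X -> R)%R) (cst 0).
    apply/(ae_eq_integral_abs PX measurableT mKy).
    transitivity (K y); last exact: Ky y ny.
    apply: eq_integral => x _; rewrite gee0_abs ?lee_fin//=.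
    by rewrite !indicE mem_ysection.
  apply: filterS => x /(_ I) h; apply: f0 => Nx.
  have Nx' : (x, y) \in N0 by rewrite inE.
  move: h; rewrite /= indicE ?mem_ysection Nx' => /eqP; rewrite eqe oner_eq0.
  done.
have gn y : ~ M y -> g^\- y = 0.
  move=> ny; rewrite (ge0_funenegE (D := [set y])) ?inE// => z ->; exact: g0 ny.
have IgE : Ig = \int[PY]_y g^\+ y.
  by rewrite /Ig integralE (@integral_null0 _ _ _ PY (g^\- ) M mM PM0 (funeneg_ge0 g) gn) sube0.
have Ig0 : 0 <= Ig by rewrite IgE integral_ge0.
set F := (f^\+) \_ E.
have F0 z : 0 <= F z.
  by rewrite /F patchE; case: ifP => // _; exact: funepos_ge0.
have mF := (measurable_restrictT (f^\+) mE).1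
  (measurable_funTS (measurable_realfun.measurable_funepos mf)).
rewrite -/F in mF.
pose H := fubini_G PX F.
have mH := measurable_fun_fubini_tonelli_G (m1 := PX) _ mF F0; rewrite -/H in mH.
have H0 y : 0 <= H y by apply: integral_ge0 => x _; exact: F0.
have HA : PXY E <= \int[PY]_y H y.
  have -> : PXY E = \int[P]_(z in E) f z := Radon_Nikodym_integral hac' mE.
  rewrite integralE.
  apply: le_trans (leeB (lexx _) (integral_ge0 _ (fun z _ => funeneg_ge0 f z))) _.
  rewrite sube0 integral_mkcond -/F.
  by rewrite (fubini_tonelli2 (m1 := PX) (m2 := PY) _ mF F0).
have HB y : H y <= g^\+ y * PX (ysection E y).
  have mEy := measurable_ysection y mE.
  rewrite -(integral_cst PX mEy).
  have -> : H y = \int[PX]_(x in ysection E y) f^\+ (x, y).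
    rewrite /H /fubini_G [RHS]integral_mkcond; apply: eq_integral => x _.
    by rewrite /F !patchE mem_ysection.
  have mfy := measurable_funTS (D := ysection E y)
    (measurable_fun_pair1 y (measurable_realfun.measurable_funepos mf)).
  apply: (ae_ge0_le_integral mEy (fun x _ => funepos_ge0 f (x, y)) mfy
    (fun x _ => funepos_ge0 g y) (measurable_cst _)).
  apply: filterS (ess_sup_ge PX (fun x => f (x, y))) => x hx _.
  by rewrite /= !funeposE; exact: le_max2 hx (lexx 0).
have [N [mN PN0 subN]] := ess_sup_ge PY (fun y => PX (ysection E y)).
set s := ess_sup PY (fun y => PX (ysection E y)).
have hs y : ~ N y -> PX (ysection E y) <= s.
  move=> ny; apply: contrapT => h; apply: ny; apply: subN; exact: h.
have s0 : 0 <= s.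
  apply: ess_sup_gee; first by have := lte01 (R := R); rewrite -(probability_setT PY).
  by apply: nearW => y; exact: measure_ge0.
have HC : \int[PY]_y H y = \int[PY]_(y in setT `\` N) H y.
  exact: (ge0_negligible_integral mN measurableT mH (fun y _ => H0 y) PN0).
apply: (le_trans HA); rewrite HC.
clearbody s.
case: s s0 hs => [r| |] s0 hs; last by [].
  rewrite lee_fin in s0.
  have [r0|rn0] := eqVneq r 0%R.
    rewrite r0 mul0e integral0_eq // => y [_ ny].
    apply/eqP; rewrite eq_le H0 andbT.
    have e : PX (ysection E y) = 0.
      apply/eqP; rewrite eq_le measure_ge0 andbT.
      by have := hs y ny; rewrite r0.
    by apply: le_trans (HB y) _; rewrite e mule0.
  have rp : (0 < r)%R by rewrite lt0r rn0 s0.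
  have ri : (0 <= r^-1)%R by rewrite invr_ge0 ltW.
  have -> : \int[PY]_(y in setT `\` N) H y =
      r%:E * \int[PY]_(y in setT `\` N) (r^-1%:E * H y).
    rewrite (ge0_integralZl_EFin PY (measurableD measurableT mN) (fun y _ => H0 y)
      (measurable_funTS mH) ri).
    by rewrite muleA -EFinM divff ?gt0_neq0 ?mul1e.
  apply: lee_wpmul2l; first by rewrite lee_fin ltW.
  apply: le_trans (le_expeR_lne _ _ Ig0).
  rewrite IgE integral_mkcond.
  apply: (@le_integral_gen _ _ _ PY).
  - move=> y; rewrite patchE; case: ifP => // _.
    by rewrite mule_ge0 // lee_fin.
  - move=> y; rewrite patchE; case: ifPn => [yD|_]; last exact: funepos_ge0.
    have ny : ~ N y by move: yD; rewrite inE => -[].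
    apply: le_trans (lee_wpmul2l _ (HB y)) _; first by rewrite lee_fin ri.
    apply: le_trans (lee_wpmul2l _ (lee_wpmul2l (funepos_ge0 g y) (hs y ny))) _.
      by rewrite lee_fin.
    by rewrite muleCA -EFinM mulVf ?gt0_neq0// mule1.
by rewrite gt0_mulye ?leey // (expeR_lne_gt0 _ _ Ig0).
Qed.
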